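(* Let $\Sigma=(\mathcal{U},\mathcal{S})$ be a set system whose sets cover $\mathcal{U}$. The set-cover solution $\mathcal{C}$ (with its assignment and levels) returned by the procedure Greedy described below is stable. Greedy: initialize $I\gets\mathcal{U}$ and all levels $\mathcal{L}_j\gets\varnothing$; while $I\neq\varnothing$, pick $S^{*}\in\arg\max_{S\in\mathcal{S}}|I\cap S|$ (ties broken arbitrarily), set $\mathtt{cov}(S^{*})\gets I\cap S^{*}$ (i.e., assign every element of $I\cap S^*$ to $S^*$), add $S^{*}$ to the level $\mathcal{L}_j$ with $2^{j}\leq|\mathtt{cov}(S^{*})|<2^{j+1}$, and set $I\gets I\setminus\mathtt{cov}(S^{*})$; return $\mathcal{C}=\bigcup_{j\geq0}\mathcal{L}_j$.
   Context: A set system $\Sigma=(\mathcal{U},\mathcal{S})$ consists of a finite universe $\mathcal{U}$ and a finite collection $\mathcal{S}$ of subsets of $\mathcal{U}$; a set-cover solution is a subcollection $\mathcal{C}\subseteq\mathcal{S}$ with $\bigcup_{S\in\mathcal{C}}S=\mathcal{U}$. For a set-cover solution $\mathcal{C}$, an assignment is a map $\phi:\mathcal{U}\to\mathcal{C}$ with $u\in\phi(u)$ for every $u$. For $S\in\mathcal{C}$, its cover set is $\mathtt{cov}(S)=\{u\in\mathcal{U}:\phi(u)=S\}$. The sets of $\mathcal{C}$ are organized into levels $\mathcal{L}_j$, $j\in\{0,1,2,\dots\}$, each set of $\mathcal{C}$ lying in exactly one level, and $A_j=\{u\in\mathcal{U}:\phi(u)\in\mathcal{L}_j\}$. The solution is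 stable if (1) for each $j$ and each $S\in\mathcal{L}_j$, $2^{j}\leq|\mathtt{cov}(S)|<2^{j+1}$; and (2) for each level $\mathcal{L}_j$, there is no $S\in\mathcal{S}$ with $|S\cap A_j|\geq 2^{j+1}$. *)

(* Defs.v *)
From mathcomp Require Import all_boot.
Set Implicit Arguments. Unset Strict Implicit. Unset Printing Implicit Defensive.

Section Defs.
Variable U : finType.   (* the finite universe is the whole type U *)

Definition set_cover (S C : {set {set U}}) : Prop :=
  C \subset S /\ \bigcup_(X in C) X = [set: U].

Definition assignment (C : {set {set U}}) (phi : U -> {set U}) : Prop :=
  forall u, phi u \in C /\ u \in phi u.

Definition cov (phi : U -> {set U}) (X : {set U}) : {set U} :=
  [set u | phi u == X].

(* levels are given by a function lvl : each set of C lies in exactly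
   one level L_j = { X in C | lvl X = j };
   A_j = { u | phi u \in L_j } *)
Definition Alevel (phi : U -> {set U}) (lvl : {set U} -> nat) (j : nat) : {set U} :=
  [set u | lvl (phi u) == j].

Definition stable (S C : {set {set U}}) (phi : U -> {set U})
    (lvl : {set U} -> nat) : Prop :=
  [/\ set_cover S C, assignment C phi,
      (forall X, X \in C -> 2 ^ lvl X <= #|cov phi X| < 2 ^ (lvl X).+1)
    & (forall j X, X \in S -> #|X :&: Alevel phi lvl j| < 2 ^ j.+1)].

(* A run of Greedy is recorded by the sequence s of picked sets S*_0, S*_1, ...
   residual s = U minus the elements covered by the sets in s (the set I). *)
Definition residual (s : seq {set U}) : {set U} :=
  [set: U] :\: \bigcup_(X <- s) X.

(* cov(S*_t) := I_t \cap S*_t, where I_t is the residual before step t *)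
Definition step_cov (s : seq {set U}) (t : nat) : {set U} :=
  residual (take t s) :&: nth set0 s t.

(* s is a complete run of Greedy on (U, S), with arbitrary tie-breaking:
   at each step I is nonempty and the pick maximizes |I \cap S| over S;
   the loop stops when I is empty. *)
Definition greedy_run (S : {set {set U}}) (s : seq {set U}) : Prop :=
  (forall t, t < size s ->
     [/\ residual (take t s) != set0,
         nth set0 s t \in S
       & forall X, X \in S ->
           #|residual (take t s) :&: X| <= #|step_cov s t| ])
  /\ residual s = set0.

Definition greedy_C (s : seq {set U}) : {set {set U}} := [set X in s].

(* each u is assigned to the pick S*_t with u \in cov(S*_t), i.e. the first pick
   containing u *)
Definition greedy_phi (s : seq {set U}) (u : U) : {set U} :=
  nth set0 s (find (fun X : {set U} => u \in X) s).

(* S*_t is put in level j with 2^j <= |cov(S*_t)| < 2^(j+1), i.e. j = floor(log2 |cov|) *)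
Definition greedy_lvl (s : seq {set U}) (X : {set U}) : nat :=
  trunc_log 2 #|step_cov s (index X s)|.

End Defs.

(* Main.v *)
Require Import Defs.
From mathcomp Require Import all_boot.

Section Aux.
Set Implicit Arguments.
Variable U : finType.

Lemma in_bigcup_seq (u : U) (r : seq {set U}) :
  (u \in \bigcup_(X <- r) X) = has (fun X : {set U} => u \in X) r.
Proof.
elim: r => [|X r IH]; first by rewrite big_nil in_set0.
by rewrite big_cons in_setU IH.
Qed.

Variable s : seq {set U}.
Hypothesis hres : residual s = set0.

Definition fu (u : U) := find (fun X : {set U} => u \in X) s.

Lemma has_u u : has (fun X : {set U} => u \in X) s.
Proof.
apply/negPn/negP => H.
have : u \in residual s by rewrite /residual in_setD in_setT in_bigcup_seq H.
by rewrite hres in_set0.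
Qed.

Lemma fu_lt u : fu u < size s.
Proof. by rewrite /fu -has_find has_u. Qed.

Lemma in_res u t : (u \in residual (take t s)) = (t <= fu u).
Proof.
by rewrite /residual in_setD in_setT in_bigcup_seq (has_take _ (has_u u)) -leqNgt andbT.
Qed.

Lemma in_step u t : (u \in step_cov s t) = (fu u == t).
Proof.
rewrite /step_cov in_setI in_res.
apply/andP/eqP.
  case=> H1 H2; apply/eqP; rewrite eqn_leq H1 andbT.
  rewrite leqNgt; apply/negP => H.
  by have := before_find set0 H; rewrite H2.
by move=> <-; split => //; apply: (nth_find set0 (has_u u)).
Qed.

Lemma index_phi u : index (greedy_phi s u) s = fu u.
Proof.
have mem : greedy_phi s u \in s by apply: mem_nth; apply: fu_lt.
apply/eqP; rewrite eqn_leq; apply/andP; split.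
  rewrite leqNgt; apply/negP => H.
  have := before_find set0 H.
  by rewrite /= /fu -/(greedy_phi s u) eqxx.
rewrite leqNgt; apply/negP => H.
have := before_find set0 H.
rewrite nth_index //.
by rewrite /greedy_phi (nth_find set0 (has_u u)).
Qed.

End Aux.

Theorem lemma1 (U : finType) (S : {set {set U}})
    (hcover : \bigcup_(X in S) X = [set: U])
    (s : seq {set U}) (hrun : greedy_run S s) :
  stable S (greedy_C s) (greedy_phi s) (greedy_lvl s).
Proof.
case: hrun => hg hres.
have pos : forall t, t < size s -> 0 < #|step_cov s t|.
  move=> t ht; have [H1 H2 H3] := hg t ht.
  have [u0 Hu0] := set0Pn _ H1.
  have : u0 \in [set: U] by rewrite in_setT.
  rewrite -hcover => /bigcupP [Y HY HuY].
  apply: leq_trans (H3 Y HY).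
  by rewrite card_gt0; apply/set0Pn; exists u0; rewrite in_setI Hu0.
split.
- split.
    by apply/subsetP => X; rewrite inE => /(nthP set0) [i Hi <-]; have [] := hg i Hi.
  apply/setP => u; rewrite in_setT; apply/bigcupP.
  exists (greedy_phi s u).
    by rewrite inE; apply: mem_nth; apply: fu_lt.
  by have := nth_find set0 (has_u hres u).
- move=> u; split.
    by rewrite inE; apply: mem_nth; apply: fu_lt.
  by have := nth_find set0 (has_u hres u).
- move=> X; rewrite inE => HX.
  set i := index X s.
  have Hi : i < size s by rewrite index_mem.
  have -> : cov (greedy_phi s) X = step_cov s i.
    apply/setP => u; rewrite /cov inE (in_step hres).
    apply/eqP/eqP.
      by move=> H; rewrite /i -H index_phi.
    by move=> H; rewrite /greedy_phi /fu in H *; rewrite H /i nth_index.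
  rewrite /greedy_lvl -/i.
  by rewrite trunc_logP ?pos // trunc_log_ltn.
- move=> j X HX.
  case: (eqVneq (X :&: Alevel (greedy_phi s) (greedy_lvl s) j) set0) => [H0|/set0Pn Hne].
    by rewrite H0 cards0 expn_gt0.
  pose P := fun t => (t < size s) && (trunc_log 2 #|step_cov s t| == j).
  have exP : exists t, P t.
    case: Hne => u; rewrite in_setI inE => /andP [_ Hu].
    exists (fu s u); rewrite /P fu_lt //=.
    by move: Hu; rewrite /greedy_lvl index_phi.
  case: (ex_minnP exP) => t /andP [Ht /eqP Hj] Hmin.
  have [_ _ H3] := hg t Ht.
  apply: leq_ltn_trans (subset_leq_card _) (leq_ltn_trans (H3 X HX) _).
    apply/subsetP => u; rewrite !in_setI inE => /andP [HuX Hu].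
    rewrite HuX andbT (in_res hres); apply: Hmin.
    rewrite /P fu_lt //=.
    by move: Hu; rewrite /greedy_lvl index_phi.
  by rewrite -Hj trunc_log_ltn.
Qed.
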